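(* There is an absolute constant $c>0$ such that the following holds. Let $f^{(1)},\dots,f^{(n)}:\{\pm1\}^d\to\{\pm1\}$ and let $\mathcal{H}$ be a class of functions $\{\pm1\}^d\to\{\pm1\}$ satisfying the $\Gamma$-simultaneous weak-learning assumption for $f^{(1)},\dots,f^{(n)}$, with $\Gamma\in(0,1]$. Let $\varepsilon\in(0,1)$ and let $S^{(1)},\dots,S^{(n)}$ be samples of size $m$ with $S^{(i)}=\{(x^{(i)}_j,f^{(i)}(x^{(i)}_j))\}_{j\in[m]}$. Then for $t\ge c\log(1/\varepsilon)/\Gamma$, the output $h^{(1)},\dots,h^{(n)}$ of $\textsc{Boost}(S^{(1)},\dots,S^{(n)},\mathcal{H},t)$ satisfies $$\frac{1}{nm}\sum_{i\in[n]}\sum_{j\in[m]}\mathbf{1}\big[\mathrm{sign}(h^{(i)}(x^{(i)}_j))\neq f^{(i)}(x^{(i)}_j)\big]\le\varepsilon.$$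
   Context: A class $\mathcal{H}$ satisfies the $\Gamma$-simultaneous weak-learning assumption for $f^{(1)},\dots,f^{(n)}$ if for all distributions $D^{(1)},\dots,D^{(n)}$ over $\{\pm1\}^d$ and all nonnegative weights $w_1,\dots,w_n$ there exists $h\in\mathcal{H}$ with $\sum_{i=1}^n w_i\,\mathbb{E}_{x\sim D^{(i)}}[f^{(i)}(x)h(x)]^2\ge\Gamma\sum_{i=1}^n w_i$. Algorithm $\textsc{Boost}(S^{(1)},\dots,S^{(n)},\mathcal{H},t)$, where $S^{(i)}=\{(x^{(i)}_j,y^{(i)}_j)\}_{j\in[m]}$: initialize real-valued functions $h^{(1)},\dots,h^{(n)}$ to the constant $0$. Repeat $t$ times: (1) for each $i\in[n],j\in[m]$ set $w^{(i)}_j=\exp(-y^{(i)}_j h^{(i)}(x^{(i)}_j))$ and $W^{(i)}=\sum_{j\in[m]}w^{(i)}_j$; (2) choose $h^\star\in\arg\max_{h\in\mathcal{H}}\sum_{i\in[n]}W^{(i)}\big(\sum_{j\in[m]}\frac{w^{(i)}_j}{W^{(i)}}y^{(i)}_jh(x^{(i)}_j)\big)^2$; (3) for each $i\in[n]$, update $h^{(i)}\leftarrow h^{(i)}+\alpha^{(i)}h^\star$ with $\alpha^{(i)}=\frac12\ln\Big(\frac{\sum_j w^{(i)}_j\mathbf{1}[y^{(i)}_j=h^\star(x^{(i)}_j)]}{\sum_j w^{(i)}_j\mathbf{1}[y^{(i)}_j\neq h^\star(x^{(i)}_j)]}\Big)$. Output $h^{(1)},\dots,h^{(n)}$. *)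

(* Defs.v *)
From mathcomp Require Import all_boot all_order all_algebra.
From mathcomp Require Import all_classical all_reals all_analysis.
From mathcomp Require Import Rstruct.
Set Implicit Arguments. Unset Strict Implicit. Unset Printing Implicit Defensive.
Import Order.TTheory GRing.Theory Num.Theory.
Local Open Scope ring_scope.

Notation RR := Rdefinitions.R.

(* The hypercube {+-1}^d, a point being a vector of d signs. *)
Definition cube (d : nat) := {ffun 'I_d -> bool}.

Definition pm1 (d : nat) (g : cube d -> RR) : Prop :=
  forall z, g z = 1 \/ g z = -1.

Definition distribution (d : nat) (D : cube d -> RR) : Prop :=
  (forall z, 0 <= D z) /\ \sum_z D z = 1.

Definition corr (d : nat) (D f h : cube d -> RR) : RR :=
  \sum_z D z * (f z * h z).

Definition simultaneous_weak_learning (d n : nat)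
    (H : (cube d -> RR) -> Prop) (f : 'I_n -> cube d -> RR) (Gamma : RR) : Prop :=
  forall (D : 'I_n -> cube d -> RR) (w : 'I_n -> RR),
    (forall i, distribution (D i)) -> (forall i, 0 <= w i) ->
    exists h, H h /\
      \sum_(i < n) w i * (corr (D i) (f i) h) ^+ 2 >= Gamma * \sum_(i < n) w i.

Section Boost.
Variables (d n m : nat).
Variable (x : 'I_n -> 'I_m -> cube d).
Variable (y : 'I_n -> 'I_m -> RR).

Definition bweight (h : 'I_n -> cube d -> RR) (i : 'I_n) (j : 'I_m) : RR :=
  expR (- (y i j * h i (x i j))).

Definition btotal (h : 'I_n -> cube d -> RR) (i : 'I_n) : RR :=
  \sum_(j < m) bweight h i j.

Definition bcorrect (h : 'I_n -> cube d -> RR) (g : cube d -> RR) (i : 'I_n) : RR :=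
  \sum_(j < m) bweight h i j * (y i j == g (x i j))%:R.

Definition bincorrect (h : 'I_n -> cube d -> RR) (g : cube d -> RR) (i : 'I_n) : RR :=
  \sum_(j < m) bweight h i j * (y i j != g (x i j))%:R.

Definition bobjective (h : 'I_n -> cube d -> RR) (g : cube d -> RR) : RR :=
  \sum_(i < n) btotal h i *
    (\sum_(j < m) (bweight h i j / btotal h i) * y i j * g (x i j)) ^+ 2.

Definition balpha (h : 'I_n -> cube d -> RR) (g : cube d -> RR) (i : 'I_n) : RR :=
  2^-1 * ln (bcorrect h g i / bincorrect h g i).

(* functions h^(1..n) after k rounds, given the hypotheses hs 0, ..., hs (k-1)
   chosen in rounds 1..k *)
Fixpoint bstate (hs : nat -> cube d -> RR) (k : nat) : 'I_n -> cube d -> RR :=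
  match k with
  | 0 => fun _ _ => 0
  | k'.+1 => fun i z =>
      bstate hs k' i z + balpha (bstate hs k') (hs k') i * hs k' z
  end.

(* hs is a valid sequence of choices of an execution of Boost for t rounds:
   each chosen hypothesis is in H and maximizes the objective (any tie-breaking),
   and every step size alpha^(i) is a well-defined real number (both the
   weighted-correct and weighted-incorrect masses are positive). *)
Definition boost_run (H : (cube d -> RR) -> Prop) (t : nat)
    (hs : nat -> cube d -> RR) : Prop :=
  forall k, (k < t)%N ->
    [/\ H (hs k),
        (forall g, H g -> bobjective (bstate hs k) g <= bobjective (bstate hs k) (hs k)),
        (forall i, 0 < bcorrect (bstate hs k) (hs k) i) &
        (forall i, 0 < bincorrect (bstate hs k) (hs k) i)].

Definition training_error (h : 'I_n -> cube d -> RR) : RR :=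
  (n * m)%:R^-1 *
    \sum_(i < n) \sum_(j < m) (Num.sg (h i (x i j)) != y i j)%:R.

End Boost.

(* Main.v *)
Require Import Defs.
From mathcomp Require Import all_boot all_order all_algebra.
From mathcomp Require Import all_classical all_reals all_analysis.
From mathcomp Require Import Rstruct.
From mathcomp Require Import ring lra.
Import Order.TTheory GRing.Theory Num.Theory.
Local Open Scope ring_scope.

Lemma one_neq_m1 : ((1:RR) == -1) = false.
Proof. by apply/negP => /eqP; lra. Qed.

Lemma m1_neq_one : ((-1:RR) == 1) = false.
Proof. by apply/negP => /eqP; lra. Qed.

Lemma pm_eq (a b : RR) : (a = 1 \/ a = -1) -> (b = 1 \/ b = -1) ->
  a * b = (a == b)%:R - (a != b)%:R.
Proof.
by move=> [->|->] [->|->]; rewrite ?eqxx ?one_neq_m1 ?m1_neq_one /=; lra.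
Qed.

Lemma sum_pick (T : finType) (a : T) (c : RR) (F : T -> RR) :
  \sum_z (c * (a == z)%:R) * F z = c * F a.
Proof.
rewrite (bigD1 a) //= eqxx mulr1 big1 ?addr0 // => z za.
by rewrite eq_sym (negbTE za) mulr0 mul0r.
Qed.

Lemma sum_pick1 (T : finType) (a : T) (c : RR) :
  \sum_z (c * (a == z)%:R) = c.
Proof.
rewrite (bigD1 a) //= eqxx mulr1 big1 ?addr0 // => z za.
by rewrite eq_sym (negbTE za) mulr0.
Qed.

Lemma key_alg (C I u : RR) : 0 < I -> 0 < u -> C = I * u^+2 ->
  C * u^-1 + I * u <= (C+I) - (C+I) * ((C-I)/(C+I))^+2 / 2.
Proof.
move=> I0 u0 ->.
have u2 : 0 < u^+2 + 1 by have := sqr_ge0 u; lra.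
rewrite -subr_ge0.
have -> : I * u ^+ 2 + I - (I * u ^+ 2 + I) * ((I * u ^+ 2 - I) / (I * u ^+ 2 + I)) ^+ 2 / 2 -
  (I * u ^+ 2 * u^-1 + I * u) = I * (u^+2 + 1 - 2 * u)^+2 / (2 * (u^+2 + 1)).
  field.
  have h1 : I * u ^+ 2 + I != 0 by apply: lt0r_neq0; have := sqr_ge0 u; nra.
  by rewrite h1 (lt0r_neq0 u2) (lt0r_neq0 u0).
apply: divr_ge0; first by apply: mulr_ge0; [lra | apply: sqr_ge0].
lra.
Qed.

Section Proof.
Variables (d n m : nat) (x : 'I_n -> 'I_m -> cube d) (y : 'I_n -> 'I_m -> RR).
Hypothesis yp : forall i j, y i j = 1 \/ y i j = -1.

Lemma bweightS hs k i j :
  bweight x y (bstate x y hs k.+1) i j =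
  bweight x y (bstate x y hs k) i j *
  expR (- (balpha x y (bstate x y hs k) (hs k) i * (y i j * hs k (x i j)))).
Proof. rewrite /bweight /= -exp.expRD; congr expR; ring. Qed.

Lemma total_CI h g i : btotal x y h i = bcorrect x y h g i + bincorrect x y h g i.
Proof.
rewrite /btotal /bcorrect /bincorrect -big_split; apply: eq_bigr => j _.
by case: eqP => _ /=; rewrite ?mulr1 ?mulr0 ?addr0 ?add0r.
Qed.

Lemma s_val h g i : pm1 g ->
  \sum_(j < m) (bweight x y h i j / btotal x y h i) * y i j * g (x i j)
  = (bcorrect x y h g i - bincorrect x y h g i) / btotal x y h i.
Proof.
move=> gp; rewrite /bcorrect /bincorrect -sumrB mulr_suml; apply: eq_bigr => j _.
by rewrite -mulrA (pm_eq _ _ (yp i j) (gp _)); ring.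
Qed.

Lemma totalS hs k i : pm1 (hs k) ->
  btotal x y (bstate x y hs k.+1) i =
  bcorrect x y (bstate x y hs k) (hs k) i * expR (- balpha x y (bstate x y hs k) (hs k) i)
  + bincorrect x y (bstate x y hs k) (hs k) i * expR (balpha x y (bstate x y hs k) (hs k) i).
Proof.
move=> gp; rewrite /btotal /bcorrect /bincorrect !mulr_suml -big_split.
apply: eq_bigr => j _; rewrite bweightS (pm_eq _ _ (yp i j) (gp _)).
by case: eqP => _ /=; rewrite ?mulr1 ?mulr0 ?subr0 ?sub0r ?mulrN1 ?opprK ?mul0r ?addr0 ?add0r ?mulr1.
Qed.

Lemma step_i hs k i : pm1 (hs k) ->
  0 < bcorrect x y (bstate x y hs k) (hs k) i ->
  0 < bincorrect x y (bstate x y hs k) (hs k) i ->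
  btotal x y (bstate x y hs k.+1) i <=
  btotal x y (bstate x y hs k) i - btotal x y (bstate x y hs k) i *
    (\sum_(j < m) (bweight x y (bstate x y hs k) i j / btotal x y (bstate x y hs k) i)
        * y i j * hs k (x i j)) ^+ 2 / 2.
Proof.
move=> gp C0 I0; rewrite totalS // s_val // (total_CI _ (hs k)).
set C := bcorrect _ _ _ _ _ in C0 *; set I := bincorrect _ _ _ _ _ in I0 *.
rewrite /balpha -/C -/I; set a := 2^-1 * _.
rewrite expRN; apply: key_alg => //; first exact: expR_gt0.
have aa : a + a = ln (C / I) by rewrite /a; field.
rewrite expr2 -exp.expRD aa lnK; first by field; rewrite gt_eqF.
by rewrite posrE divr_gt0.
Qed.

Definition Phi h := \sum_(i < n) btotal x y h i.

Lemma step hs k : pm1 (hs k) ->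
  (forall i, 0 < bcorrect x y (bstate x y hs k) (hs k) i) ->
  (forall i, 0 < bincorrect x y (bstate x y hs k) (hs k) i) ->
  Phi (bstate x y hs k.+1) <= Phi (bstate x y hs k) - bobjective x y (bstate x y hs k) (hs k) / 2.
Proof.
move=> gp C0 I0; rewrite /Phi /bobjective mulr_suml -sumrB.
by apply: ler_sum => i _; apply: step_i.
Qed.

End Proof.
Arguments Phi {d n m} x y h.

Section WL.
Variables (d n m : nat) (x : 'I_n -> 'I_m -> cube d) (f : 'I_n -> cube d -> RR).
Variables (H : (cube d -> RR) -> Prop) (Gamma : RR).

Lemma wl h : simultaneous_weak_learning H f Gamma ->
  (forall i, 0 < btotal x (fun i j => f i (x i j)) h i) ->
  exists g, H g /\ Gamma * Phi x (fun i j => f i (x i j)) h <=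
     bobjective x (fun i j => f i (x i j)) h g.
Proof.
move=> swl W0.
set y := fun i j => f i (x i j).
have [|//|g [Hg ineq]] := swl (fun i z => \sum_(j < m) (bweight x y h i j / btotal x y h i)
    * (x i j == z)%:R) (fun i => btotal x y h i).
- move=> i; split.
    move=> z; apply: sumr_ge0 => j _; apply: mulr_ge0; last by rewrite ler0n.
    by apply: divr_ge0; [exact: expR_ge0 | exact: ltW].
  rewrite exchange_big /=.
  under eq_bigr do rewrite sum_pick1.
  by rewrite -mulr_suml -/(btotal x y h i) divff //; apply: lt0r_neq0; apply: W0.
- by move=> i; apply: ltW; apply: W0.
exists g; split => //; apply: (le_trans ineq); rewrite /bobjective.
rewrite le_eqVlt; apply/orP; left; apply/eqP; apply: eq_bigr => i _.
congr (_ * _ ^+ 2); rewrite /corr.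
under eq_bigr do rewrite mulr_suml.
rewrite exchange_big /=; apply: eq_bigr => j _.
by rewrite sum_pick /y mulrA.
Qed.

End WL.

Lemma err_le (a h : RR) : (a = 1 \/ a = -1) -> ((Num.sg h != a)%:R : RR) <= expR (- (a * h)).
Proof.
move=> ha; case: eqP => [_|ne] /=; first exact: expR_ge0.
have : 0 <= -(a*h).
  case: ha ne => -> ne.
  - have : ~~ (0 < h) by rewrite -sgr_cp0; apply/eqP.
    by rewrite -leNgt => ?; lra.
  - have : ~~ (h < 0) by rewrite -sgr_cp0; apply/eqP.
    by rewrite -leNgt => ?; lra.
move=> hp; have := expR_ge1Dx (-(a*h)); lra.
Qed.

Lemma pow_le (a b : RR) k : 0 <= a -> a <= b -> a ^+ k <= b ^+ k.
Proof.
move=> a0 ab; elim: k => [|k IH]; rewrite ?expr0 // !exprS.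
by apply: ler_pM => //; exact: exprn_ge0.
Qed.

Lemma sum_const_ord k (c : RR) : \sum_(i < k) c = c *+ k.
Proof. by rewrite sumr_const card_ord. Qed.

Theorem mainTheorem4 :
  exists c : RR, 0 < c /\
  forall (d n m : nat) (f : 'I_n -> cube d -> RR)
         (H : (cube d -> RR) -> Prop) (Gamma eps : RR),
    (forall i, pm1 (f i)) ->
    (forall h, H h -> pm1 h) ->
    0 < Gamma -> Gamma <= 1 ->
    simultaneous_weak_learning H f Gamma ->
    0 < eps -> eps < 1 ->
    forall (x : 'I_n -> 'I_m -> cube d) (t : nat) (hs : nat -> cube d -> RR),
      c * ln (eps^-1) / Gamma <= t%:R ->
      boost_run x (fun i j => f i (x i j)) H t hs ->
      training_error x (fun i j => f i (x i j))
        (bstate x (fun i j => f i (x i j)) hs t) <= eps.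
Proof.
exists 2; split; first lra.
move=> d n m f H G eps fp Hp G0 G1 swl e0 e1 x t hs ht run.
set y := fun i j => f i (x i j).
have yp : forall i j, y i j = 1 \/ y i j = -1 by move=> i j; apply: fp.
set q := 1 - G/2.
have q0 : 0 <= q by rewrite /q; lra.
have bound : forall k, (k <= t)%N -> Phi x y (bstate x y hs k) <= (n * m)%:R * q^+k.
  elim => [_|k IH kt].
  - rewrite expr0 mulr1 /Phi /btotal /bweight /=.
    under eq_bigr do under eq_bigr do rewrite mulr0 oppr0 exp.expR0.
    rewrite (eq_bigr (fun _ => m%:R)); last by move=> i _; rewrite sum_const_ord.
    by rewrite sum_const_ord natrM mulr_natl.
  - have kt' : (k < t)%N := kt.
    case: (run k kt') => Hk maxk C0 I0.
    have gp := Hp _ Hk.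
    have W0 : forall i, 0 < btotal x y (bstate x y hs k) i.
      by move=> i; rewrite (@total_CI d n m x y _ (hs k)) addr_gt0.
    have [g [Hg ineq]] := @wl d n m x f H G _ swl W0.
    have mg := maxk g Hg.
    have st := @step d n m x y yp hs k gp C0 I0.
    have IH' := IH (ltnW kt).
    have : Phi x y (bstate x y hs k.+1) <= q * Phi x y (bstate x y hs k).
      rewrite /q; move: ineq mg st; rewrite -/y; nra.
    move/le_trans; apply; rewrite exprSr mulrA mulrC.
    apply: (ler_wpM2r q0). exact: IH'.
have Pt := bound t (leqnn t).
have E : \sum_(i < n) \sum_(j < m) ((Num.sg (bstate x y hs t i (x i j)) != y i j)%:R : RR)
   <= Phi x y (bstate x y hs t).
  by apply: ler_sum => i _; apply: ler_sum => j _; apply: err_le.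
have qt : q ^+ t <= eps.
  apply: (@le_trans _ _ (expR (- (G/2)) ^+ t)).
    by apply: pow_le => //; have := expR_ge1Dx (- (G/2)); rewrite /q; lra.
  rewrite -expRM_natl.
  have L : ln (eps^-1) <= t%:R * (G/2).
    by rewrite ler_pdivrMr // in ht; lra.
  rewrite -[X in _ <= X](lnK (x:=eps)) ?posrE //; rewrite ler_expR.
  by rewrite lnV ?posrE // in L; lra.
rewrite /training_error.
case: (n * m)%N => [|nm] in Pt *.
  by rewrite invr0 mul0r; exact: ltW.
apply: (le_trans _ qt).
apply: (@le_trans _ _ (nm.+1%:R^-1 * ((nm.+1)%:R * q ^+ t))).
  by apply: ler_wpM2l; [rewrite invr_ge0 ler0n | exact: le_trans E Pt].
by rewrite mulrA mulVf ?mul1r // pnatr_eq0.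
Qed.
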